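(* Let $\Gamma$ be a finitely generated group with finite symmetric generating set $S$ acting by permutations on a countable set $X$, and $w:X\to(0,\infty)$ balanced. If there is no $w$-Følner sequence in $X$, then there exists a $w$-compression system.
   Context: $w$ is balanced: there is $C>1$ with $1/C<w(sx)/w(x)<C$ for all $x\in X$, $s\in S$. For finite $H\subseteq X$, $w(H)=\sum_{x\in H}w(x)$. A sequence $(F_n)$ of finite nonempty subsets of $X$ is a $w$-Følner sequence if for every $\epsilon>0$ and finite $L\subset\Gamma$ there is $n_{\epsilon,L}$ with $w(gF_n\cup F_n)/w(F_n)<1+\epsilon$ for all $n\ge n_{\epsilon,L}$, $g\in L$. A $w$-compression system is a finite set $T\subset\Gamma$ together with bounded nonnegative functions $\Psi_g:X\to\mathbb{R}$ ($g\in T$) such that for every $x\in X$: $\sum_{g\in T}\Psi_g(x)=1$ and $\sum_{g\in T}\Psi_g(g^{-1}x)\frac{w(g^{-1}x)}{w(x)}<\frac12$. *)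

(* Defs.v *)
From mathcomp Require Import all_boot.
From Stdlib Require Import Reals List.
Set Implicit Arguments.
Unset Strict Implicit.

Local Open Scope R_scope.

Definition is_group (G : Type) (mul : G -> G -> G) (inv : G -> G) (one : G) : Prop :=
  (forall a b c, mul a (mul b c) = mul (mul a b) c) /\
  (forall a, mul one a = a) /\ (forall a, mul a one = a) /\
  (forall a, mul (inv a) a = one) /\ (forall a, mul a (inv a) = one).

(* Left action of G on X (each act g is then a permutation of X). *)
Definition is_action (G X : Type) (mul : G -> G -> G) (one : G) (act : G -> X -> X) : Prop :=
  (forall x, act one x = x) /\ (forall g h x, act (mul g h) x = act g (act h x)).

Definition symmetric_generating (G : Type) (mul : G -> G -> G) (inv : G -> G) (one : G)
  (S : list G) : Prop :=
  (forall s, List.In s S -> List.In (inv s) S) /\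
  (forall g, exists l : list G,
     (forall s, List.In s l -> List.In s S) /\ g = List.fold_right mul one l).

Definition balanced (G : Type) (X : Type) (act : G -> X -> X) (S : list G) (w : X -> R) : Prop :=
  exists C, 1 < C /\ forall x s, List.In s S ->
    / C < w (act s x) / w x /\ w (act s x) / w x < C.

(* w(H) for a finite subset H of X, represented by a list (duplicates ignored). *)
Definition wsum (X : countType) (w : X -> R) (H : list X) : R :=
  List.fold_right Rplus 0 (List.map w (undup H)).

Definition translate_union (G : Type) (X : countType) (act : G -> X -> X) (g : G) (F : list X)
  : list X := undup (List.map (act g) F ++ F).

Definition w_Folner_sequence (G : Type) (X : countType) (act : G -> X -> X) (w : X -> R)
  (F : nat -> list X) : Prop :=
  (forall n, F n <> nil) /\
  forall eps : R, 0 < eps -> forall L : list G, exists N : nat, forall n : nat, (N <= n)%nat ->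
    forall g, List.In g L ->
      wsum w (translate_union act g (F n)) / wsum w (F n) < 1 + eps.

(* sum over a finite subset T of the group (T a duplicate-free list). *)
Definition gsum (G : Type) (T : list G) (f : G -> R) : R :=
  List.fold_right Rplus 0 (List.map f T).

Definition w_compression_system (G : Type) (X : Type) (inv : G -> G) (act : G -> X -> X)
  (w : X -> R) (T : list G) (Psi : G -> X -> R) : Prop :=
  List.NoDup T /\
  (forall g, List.In g T ->
     (forall x, 0 <= Psi g x) /\ exists B, forall x, Psi g x <= B) /\
  forall x : X,
    gsum T (fun g => Psi g x) = 1 /\
    gsum T (fun g => Psi g (act (inv g) x) * (w (act (inv g) x) / w x)) < / 2.

(* Main.v *)
Require Import Defs.
From mathcomp Require Import all_boot.
From Stdlib Require Import Reals List.
From mathcomp Require all_order all_algebra ring lra all_classical all_reals all_analysis Rstruct.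

Module Hall.
Import all_boot all_order all_algebra ring lra.
Set Implicit Arguments. Unset Strict Implicit.
Import Order.TTheory GRing.Theory Num.Theory.
Local Open Scope ring_scope.

Section Hall.
Variables (R : realFieldType) (A : finType) (B : eqType) (m : nat) (tgt : A -> 'I_m -> B).

Definition U : seq B := undup [seq tgt p.1 p.2 | p <- enum [set: A * 'I_m]].
Definition NS (D : {set A * 'I_m}) (F : {set A}) (y : B) : bool :=
  [exists p in D, (p.1 \in F) && (tgt p.1 p.2 == y)].
Definition hall (D : {set A * 'I_m}) (a : A -> R) (c : B -> R) :=
  forall F : {set A}, \sum_(x in F) a x <= \sum_(y <- U | NS D F y) c y.
Definition inflow (f : A -> 'I_m -> R) (y : B) := \sum_x \sum_(i | tgt x i == y) f x i.
Definition good (D : {set A * 'I_m}) (a : A -> R) (c : B -> R) (f : A -> 'I_m -> R) := [/\ (forall x i, 0 <= f x i),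
  (forall x i, (x, i) \notin D -> f x i = 0), (forall x, \sum_i f x i = a x) &
  (forall y, inflow f y <= c y)].

Lemma U_uniq : uniq U. Proof. exact: undup_uniq. Qed.
Lemma tgt_in_U x i : tgt x i \in U.
Proof. by rewrite mem_undup; apply/mapP; exists (x, i); rewrite ?mem_enum ?inE. Qed.

Lemma sum_ind_seq (P : pred B) y0 :
  \sum_(y <- U | P y) ((y == y0)%:R : R) = ((P y0) && (y0 \in U))%:R.
Proof.
rewrite big_mkcond /=.
case: (boolP (y0 \in U)) => hy.
  rewrite (bigD1_seq y0) //= ?U_uniq // eqxx andbT big1 ?addr0.
    by case: (P y0).
  by move=> y /negbTE ->; case: (P y).
rewrite andbF big1_seq // => y /andP [_ hyU]; case: eqP => [e|]; last by case: (P y).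
by move: hy; rewrite -e hyU.
Qed.

Lemma sum_ind_set (F : {set A}) x0 :
  \sum_(x in F) ((x == x0)%:R : R) = (x0 \in F)%:R.
Proof.
case: (boolP (x0 \in F)) => hx.
  rewrite (bigD1 x0) //= eqxx big1 ?addr0 // => x /andP [_ /negbTE ->] //.
by rewrite big1 // => x hxF; case: eqP => // e; move: hx; rewrite -e hxF.
Qed.

Lemma inflow_add f g y : inflow (fun x i => f x i + g x i) y = inflow f y + inflow g y.
Proof. by rewrite /inflow -big_split; apply: eq_bigr => x _; rewrite big_split. Qed.

Lemma inflow_ge0 f y : (forall x i, 0 <= f x i) -> 0 <= inflow f y.
Proof. by move=> h; apply: sumr_ge0 => x _; apply: sumr_ge0. Qed.

Lemma inflow_delta (x0 : A) (i0 : 'I_m) (t : R) y :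
  inflow (fun x i => if (x == x0) && (i == i0) then t else 0) y = t * (y == tgt x0 i0)%:R.
Proof.
rewrite /inflow (bigD1 x0) //= [X in _ + X]big1 ?addr0; last first.
  by move=> x /= /negbTE hx; rewrite big1 // => i _; rewrite hx.
rewrite big_mkcond (bigD1 i0) //= eqxx /= [X in _ + X]big1 ?addr0.
  by rewrite eqxx eq_sym; case: eqP => _; rewrite ?mulr1 ?mulr0.
by move=> i /= /negbTE ->; case: ifP.
Qed.

Lemma push_back (D D' : {set A * 'I_m}) (a : A -> R) (c : B -> R) (f' : A -> 'I_m -> R) (x0 : A) (i0 : 'I_m) (t : R) :
  {subset D' <= D} -> (x0, i0) \in D -> 0 <= t ->
  good D' (fun x => a x - t * (x == x0)%:R) (fun y => c y - t * (y == tgt x0 i0)%:R) f' ->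
  good D a c (fun x i => f' x i + if (x == x0) && (i == i0) then t else 0).
Proof.
move=> sub hD ht [h1 h2 h3 h4]; split.
- by move=> x i; apply: addr_ge0 => //; case: ifP.
- move=> x i hn; rewrite h2; last by apply: contra hn; apply: sub.
  case: ifP => [/andP [/eqP hx0 /eqP hi0]|_]; last by rewrite addr0.
  by rewrite hx0 hi0 hD in hn.
- move=> x; rewrite big_split /= h3.
  case: (eqVneq x x0) => [->|hx] /=.
    rewrite mulr1 (bigD1 i0) //= eqxx big1 ?addr0 ?subrK //.
    by move=> i /negbTE ->.
  by rewrite mulr0 subr0 big1 ?addr0.
- move=> y; rewrite inflow_add inflow_delta; have := h4 y; lra.
Qed.

Lemma foldr_min_le (v : R) l : foldr Num.min v l <= v /\ forall z, z \in l -> foldr Num.min v l <= z.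
Proof.
elim: l => [|z l [IH1 IH2]] /=; first by split.
split; first by rewrite ge_min IH1 orbT.
move=> z'; rewrite inE => /orP [/eqP ->|hz]; first by rewrite ge_min lexx.
by rewrite ge_min IH2 ?orbT.
Qed.

Lemma foldr_min_eq (v : R) l : foldr Num.min v l = v \/ exists2 z, z \in l & foldr Num.min v l = z.
Proof.
elim: l => [|z l IH] /=; first by left.
rewrite /Num.min; case: ifP => _; first by right; exists z; rewrite ?inE ?eqxx.
case: IH => [->|[z' hz' ->]]; first by left.
by right; exists z'; rewrite // inE hz' orbT.
Qed.


Lemma card_lt (D' D : {set A * 'I_m}) p :
  {subset D' <= D} -> p \in D -> p \notin D' -> (#|D'| < #|D|)%N.
Proof.
move=> sub hp hn; apply: proper_card; apply/properP; split.
  by apply/subsetP.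
by exists p.
Qed.

Lemma NS_ext (D1 D2 : {set A * 'I_m}) (F1 F2 : {set A}) :
  (forall p, (p \in D1) && (p.1 \in F1) = (p \in D2) && (p.1 \in F2)) ->
  NS D1 F1 =1 NS D2 F2.
Proof.
move=> h y; rewrite /NS; apply: eq_existsb => p.
by rewrite !andbA h.
Qed.

Lemma NS_witness (D : {set A * 'I_m}) (F : {set A}) x i :
  (x, i) \in D -> x \in F -> NS D F (tgt x i).
Proof. by move=> hD hF; apply/existsP; exists (x, i); rewrite hD hF eqxx. Qed.

Lemma sum_mkcond_eq (F1 F2 : {set A}) (g1 g2 : A -> R) :
  (forall x, (if x \in F1 then g1 x else 0) = (if x \in F2 then g2 x else 0)) ->
  \sum_(x in F1) g1 x = \sum_(x in F2) g2 x.
Proof. by move=> h; rewrite big_mkcond [RHS]big_mkcond; apply: eq_bigr => x _. Qed.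

Lemma sumU_mkcond_eq (P1 P2 : pred B) (g1 g2 : B -> R) :
  (forall y, (if P1 y then g1 y else 0) = (if P2 y then g2 y else 0)) ->
  \sum_(y <- U | P1 y) g1 y = \sum_(y <- U | P2 y) g2 y.
Proof. by move=> h; rewrite big_mkcond [RHS]big_mkcond; apply: eq_bigr => y _. Qed.

Lemma sumU_mkcond_le (P1 P2 : pred B) (g1 g2 : B -> R) :
  (forall y, (if P1 y then g1 y else 0) <= (if P2 y then g2 y else 0)) ->
  \sum_(y <- U | P1 y) g1 y <= \sum_(y <- U | P2 y) g2 y.
Proof. by move=> h; rewrite big_mkcond [X in _ <= X]big_mkcond; apply: ler_sum => y _. Qed.

Lemma hall_step (D : {set A * 'I_m}) :
  (forall (D' : {set A * 'I_m}) (a : A -> R) (c : B -> R), (#|D'| < #|D|)%N ->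
     (forall x, 0 <= a x) -> (forall y, 0 <= c y) -> hall D' a c -> exists f, good D' a c f) ->
  forall (a : A -> R) (c : B -> R), (forall x, 0 <= a x) -> (forall y, 0 <= c y) ->
  hall D a c -> exists f, good D a c f.
Proof.
move=> IH a c ha hc hH.
case: (boolP [forall x, a x == 0]) => [/forallP a0|].
  exists (fun _ _ => 0); split => //.
  - by move=> x; rewrite big1 // (eqP (a0 x)).
  - by move=> y; rewrite /inflow big1 // => x _; rewrite big1.
rewrite negb_forall => /existsP [x0 hx0].
have ax0 : 0 < a x0 by rewrite lt_def hx0 ha.
have [i0 hi0] : exists i0, (x0, i0) \in D.
  case: (boolP [exists i, (x0, i) \in D]) => [/existsP [i0 hi0]|hno]; first by exists i0.
  exfalso; have := hH [set x0]; rewrite big_set1 big1 => [|y hy].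
    by move=> h; have := lt_le_trans ax0 h; rewrite ltxx.
  exfalso; move: hy => /existsP [[x i] /andP [hxi /andP [/= hx _]]].
  move: hx; rewrite inE => /eqP ex'; move: hno; rewrite negb_exists => /forallP /(_ i).
  by rewrite -ex' hxi.
set y0 := tgt x0 i0.
pose slack (F : {set A}) := \sum_(y <- U | NS D F y) c y - \sum_(x in F) a x.
have slack0 F : 0 <= slack F by rewrite /slack subr_ge0.
pose Fs := [seq F : {set A} <- enum {set A} | (x0 \notin F) && NS D F y0].
pose t := foldr Num.min (Num.min (a x0) (c y0)) [seq slack F | F <- Fs].
have [tle1 tle2] := foldr_min_le (Num.min (a x0) (c y0)) [seq slack F | F <- Fs].
have hta : t <= a x0 by apply: le_trans tle1 _; rewrite ge_min lexx.
have htc : t <= c y0 by apply: le_trans tle1 _; rewrite ge_min lexx orbT.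
have hts (F : {set A}) : x0 \notin F -> NS D F y0 -> t <= slack F.
  move=> h1 h2; apply: tle2; apply/mapP; exists F => //.
  by rewrite mem_filter h1 h2 mem_enum.
have ht0 : 0 <= t.
  rewrite /t; case: (foldr_min_eq (Num.min (a x0) (c y0)) [seq slack F | F <- Fs]) => [->|[z /mapP [F _ ->] ->]] //.
  by rewrite le_min hc (ltW ax0).
pose a' := fun x => a x - t * (x == x0)%:R.
pose c' := fun y => c y - t * (y == y0)%:R.
have ha' x : 0 <= a' x.
  rewrite /a'; case: eqP => [->|_]; rewrite ?mulr1 ?mulr0; [by rewrite subr_ge0 | by rewrite subr0].
have hc' y : 0 <= c' y.
  rewrite /c'; case: eqP => [->|_]; rewrite ?mulr1 ?mulr0; [by rewrite subr_ge0 | by rewrite subr0].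
have suma' (F : {set A}) : \sum_(x in F) a' x = \sum_(x in F) a x - t * (x0 \in F)%:R.
  by rewrite /a' sumrB -mulr_sumr sum_ind_set.
have sumc' (P : pred B) : \sum_(y <- U | P y) c' y = \sum_(y <- U | P y) c y - t * (P y0)%:R.
  by rewrite /c' sumrB -mulr_sumr sum_ind_seq /y0 tgt_in_U andbT.
have hH' : hall D a' c'.
  move=> F; rewrite suma' sumc'; have := hH F.
  case: (boolP (x0 \in F)) => hx.
    by rewrite (NS_witness hi0 hx) /=; move=> h; rewrite lerB.
  case: (boolP (NS D F y0)) => hn /= h; last by rewrite !mulr0 !subr0.
  have := hts F hx hn; rewrite /slack mulr0 mulr1 subr0; lra.
have fin : forall (D' : {set A * 'I_m}), {subset D' <= D} -> (x0, i0) \notin D' ->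
    hall D' a' c' -> exists f, good D a c f.
  move=> D' sub hn hD'.
  have [f' hf'] := IH D' a' c' (card_lt sub hi0 hn) ha' hc' hD'.
  by exists (fun x i => f' x i + if (x == x0) && (i == i0) then t else 0); apply: push_back hf'.
case: (foldr_min_eq (Num.min (a x0) (c y0)) [seq slack F | F <- Fs]) => [htm|[z /mapP [F1 hF1 ->] htF1]].
  have [hta'|htc'] : t = a x0 \/ t = c y0.
      by rewrite -/t in htm; rewrite htm /Num.min; case: ifP; [left|right].
  - (* case x0 exhausted *)
    apply: (fin [set p in D | p.1 != x0]).
    + by move=> p; rewrite inE => /andP [].
    + by rewrite inE /= eqxx andbF.
    move=> F; have -> : \sum_(x in F) a' x = \sum_(x in F :\ x0) a' x.
      apply: sum_mkcond_eq => x; rewrite in_setD1; case: eqP => [->|]; last by [].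
      by rewrite /a' eqxx mulr1 hta' subrr; case: ifP.
    apply: (le_trans (hH' _)); rewrite le_eqVlt; apply/orP; left; apply/eqP.
    apply: eq_bigl => y; apply: NS_ext => p; rewrite !inE.
    by case: (p \in D); case: (p.1 == x0); case: (p.1 \in F).
  - (* case y0 saturated *)
    apply: (fin [set p in D | tgt p.1 p.2 != y0]).
    + by move=> p; rewrite inE => /andP [].
    + by rewrite inE /= eqxx andbF.
    move=> F; apply: (le_trans (hH' F)); rewrite le_eqVlt; apply/orP; left; apply/eqP.
    apply: sumU_mkcond_eq => y; case: (eqVneq y y0) => [->|hy].
      by rewrite /c' eqxx mulr1 htc' subrr; case: ifP; case: ifP.
    have -> : NS [set p in D | tgt p.1 p.2 != y0] F y = NS D F y; last by [].
    rewrite /NS; apply: eq_existsb => p; rewrite !inE.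
    case: (boolP (tgt p.1 p.2 == y)) => [/eqP e|]; last by rewrite !andbF.
    by rewrite e hy andbT.
move: hF1; rewrite mem_filter => /andP [/andP [hx0F1 hNS1] _].
have htF : t = slack F1 by exact: htF1.
have tight : \sum_(x in F1) a' x = \sum_(y <- U | NS D F1 y) c' y.
  rewrite suma' sumc' (negbTE hx0F1) hNS1 mulr0 subr0 mulr1 htF /slack; lra.
pose D1 := [set p in D | p.1 \in F1].
pose a1 := fun x => if x \in F1 then a' x else 0.
pose D2 := [set p in D | (p.1 \notin F1) && ~~ NS D F1 (tgt p.1 p.2)].
pose a2 := fun x => if x \in F1 then 0 else a' x.
pose c2 := fun y => if NS D F1 y then 0 else c' y.
have ha1 x : 0 <= a1 x by rewrite /a1; case: ifP.
have ha2 x : 0 <= a2 x by rewrite /a2; case: ifP.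
have hc2 y : 0 <= c2 y by rewrite /c2; case: ifP.
have hD1 : hall D1 a1 c'.
  move=> F; have -> : \sum_(x in F) a1 x = \sum_(x in F :&: F1) a' x.
    by apply: sum_mkcond_eq => x; rewrite in_setI /a1; case: (x \in F); case: (x \in F1).
  apply: (le_trans (hH' _)); rewrite le_eqVlt; apply/orP; left; apply/eqP.
  apply: eq_bigl => y; apply: NS_ext => p; rewrite !inE.
  by case: (p \in D); case: (p.1 \in F); case: (p.1 \in F1).
have hD2 : hall D2 a2 c2.
  move=> F; set H := F :\: F1.
  have -> : \sum_(x in F) a2 x = \sum_(x in H) a' x.
    by apply: sum_mkcond_eq => x; rewrite in_setD /a2; case: (x \in F); case: (x \in F1).
  have eU : \sum_(x in H :|: F1) a' x = \sum_(x in H) a' x + \sum_(x in F1) a' x.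
    rewrite big_mkcond [X in X + _]big_mkcond [X in _ + X]big_mkcond -big_split.
    apply: eq_bigr => x _; rewrite in_setU in_setD.
    by case: (x \in F1); case: (x \in F); rewrite /= ?addr0 ?add0r.
  have h1 := hH' (H :|: F1).
  have mono y : NS D F1 y -> NS D (H :|: F1) y.
    move=> /existsP [p /andP [hp /andP [hp1 hp2]]]; apply/existsP; exists p.
    by rewrite hp in_setU hp1 orbT hp2.
  have e2 : \sum_(y <- U | NS D (H :|: F1) y) c' y - \sum_(y <- U | NS D F1 y) c' y
          = \sum_(y <- U | NS D (H :|: F1) y && ~~ NS D F1 y) c' y.
    apply/eqP; rewrite subr_eq; apply/eqP.
    rewrite big_mkcond [X in _ = X + _]big_mkcond [X in _ = _ + X]big_mkcond -big_split.
    apply: eq_bigr => y _ /=; case: (boolP (NS D F1 y)) => h.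
      by rewrite (mono y h) /= add0r.
    by rewrite andbT addr0.
  have e3 : \sum_(y <- U | NS D (H :|: F1) y && ~~ NS D F1 y) c' y <= \sum_(y <- U | NS D2 F y) c2 y.
    apply: sumU_mkcond_le => y.
    case: (boolP (NS D (H :|: F1) y && ~~ NS D F1 y)) => [/andP [hy1 hy2]|_]; last by case: ifP.
    have -> : NS D2 F y.
      move: hy1 => /existsP [p /andP [hp /andP [hp1 hp2]]]; apply/existsP; exists p.
      have hpF1 : p.1 \notin F1.
        apply: contra hy2 => h; apply/existsP; exists p; by rewrite hp h hp2.
      move: hp1; rewrite in_setU (negbTE hpF1) orbF in_setD => /andP [_ hpF].
      by rewrite /D2 !inE hp hpF1 hpF (eqP hp2) hy2 eqxx.
    by rewrite /c2 (negbTE hy2).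
  move: h1 e2 e3 tight; rewrite eU; lra.
have sub1 : {subset D1 <= D} by move=> p; rewrite inE => /andP [].
have n1 : (x0, i0) \notin D1 by rewrite inE /= (negbTE hx0F1) andbF.
have [f1 [g11 g12 g13 g14]] := IH D1 a1 c' (card_lt sub1 hi0 n1) ha1 hc' hD1.
have sub2 : {subset D2 <= D} by move=> p; rewrite inE => /andP [].
have n2 : (x0, i0) \notin D2 by rewrite inE /= hNS1 !andbF.
have [f2 [g21 g22 g23 g24]] := IH D2 a2 c2 (card_lt sub2 hi0 n2) ha2 hc2 hD2.
have gf : good D a' c' (fun x i => f1 x i + f2 x i).
  split.
  - by move=> x i; apply: addr_ge0.
  - move=> x i hn.
    have h1 : (x, i) \notin D1 := contra (@sub1 (x, i)) hn.
    have h2 : (x, i) \notin D2 := contra (@sub2 (x, i)) hn.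
    by rewrite g12 // g22 // addr0.
  - move=> x; rewrite big_split /= g13 g23 /a1 /a2; case: ifP => _; by rewrite ?addr0 ?add0r.
  - move=> y; rewrite inflow_add; case: (boolP (NS D F1 y)) => hy.
      have := g24 y; rewrite /c2 hy => h2; have := g14 y.
      have h0 : 0 <= inflow f2 y by apply: inflow_ge0.
      lra.
    have -> : inflow f1 y = 0.
      rewrite /inflow big1 // => x _; rewrite big1 // => i /eqP hi.
      apply: g12; apply: contra hy => hxi; rewrite -hi; apply: NS_witness.
        exact: sub1.
      by move: hxi; rewrite inE => /andP [].
    by have := g24 y; rewrite /c2 (negbTE hy) add0r.
exists (fun x i => (f1 x i + f2 x i) + if (x == x0) && (i == i0) then t else 0).
by apply: (push_back (D' := D)).
Qed.

Lemma hall_finite n : forall (D : {set A * 'I_m}) (a : A -> R) (c : B -> R), (#|D| <= n)%N ->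
  (forall x, 0 <= a x) -> (forall y, 0 <= c y) -> hall D a c -> exists f, good D a c f.
Proof.
elim: n => [|n IH] D a c hn; apply: hall_step => D' a' c' hlt.
  by move: (leq_trans hlt hn).
by apply: IH; rewrite -ltnS; apply: leq_trans hlt hn.
Qed.

End Hall.

End Hall.

Module Clu.
Import all_boot all_order all_algebra all_classical all_reals all_analysis.
Set Implicit Arguments. Unset Strict Implicit.
Import Order.TTheory GRing.Theory Num.Theory.
Import numFieldNormedType.Exports.
Local Open Scope classical_set_scope.
Local Open Scope ring_scope.


Import ArrowAsProduct.


Lemma cluster_seq (R : realType) (I : eqType) (psi : nat -> I -> R) : (forall n i, 0 <= psi n i <= 1) ->
  exists p : I -> R, (forall i, 0 <= p i <= 1) /\
   forall (cs : seq I) (e : R), 0 < e -> forall N, exists n, (N <= n)%N /\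
     forall c, c \in cs -> `|psi n c - p c| < e.
Proof.
move=> hpsi.
pose A := [set f : I -> R | forall i, `[0, 1]%classic (f i)].
have cA : compact A := @tychonoff I (fun=> R) (fun=> `[0, 1]%classic) (fun=> @segment_compact R 0 1).
have PF : ProperFilter (psi @ \oo) by apply: fmap_proper_filter.
have FA : (psi @ \oo) A.
  by exists 0%N => // n _ i /=; rewrite in_itv /=; apply: hpsi.
have [p [Ap clp]] := cA _ PF FA.
exists p; split.
  by move=> i; have := Ap i; rewrite /= in_itv.
move=> cs e e0 N.
have nB : nbhs p [set f : I -> R | forall c, c \in cs -> `|f c - p c| < e].
  elim: cs => [|c cs IH].
    by apply: filterS filterT => f _ c; rewrite in_nil.
  have h1 : nbhs p [set f : I -> R | `|f c - p c| < e].
    have hb : nbhs (p c) (ball (p c) e) := nbhsx_ballx (p c) e e0.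
    have := @proj_continuous I (fun=> R) c p _ hb.
    suff -> : [set f : I -> R | `|f c - p c| < e] = proj c @^-1` (ball (p c) e) by [].
    apply/seteqP; split => f /=; rewrite /proj -ball_normE /= distrC //.
  apply: filterS (filterI h1 IH) => f [hf1 hf2] c'; rewrite inE => /orP [/eqP ->|hc] //.
  exact: hf2.
have FA0 : (psi @ \oo) (psi @` [set n | (N <= n)%N]).
  by exists N => // n hn; exists n.
have [f [[n hn <-] hB]] := clp _ _ FA0 nB.
by exists n.
Qed.


End Clu.
Module H.
Import all_boot all_order all_algebra ring lra all_classical all_reals Rstruct.
Import Order.TTheory GRing.Theory Num.Theory.
Local Open Scope ring_scope.
Set Implicit Arguments. Unset Strict Implicit.

Section Part1.
Variables (X : countType) (w : X -> R).
Hypothesis wpos : forall x, 0 < w x.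

Lemma lmapE (A B : Type) (f : A -> B) (l : list A) : List.map f l = map f l.
Proof. by elim: l => //= a l ->. Qed.

Lemma InE (A : eqType) (x : A) (l : list A) : List.In x l <-> x \in l.
Proof.
elim: l => [|a l IH] //=; rewrite inE; split.
  by case=> [->|/IH ->]; rewrite ?eqxx ?orbT.
by case/orP => [/eqP ->|/IH]; [left|right].
Qed.

Lemma wsumE (s : seq X) : wsum w s = \sum_(x <- undup s) w x.
Proof. rewrite /wsum; elim: (undup s) => [|x l IH] /=; by rewrite ?big_nil ?big_cons ?IH. Qed.

Lemma wsum_ext (s t : seq X) : (forall x, (x \in s) = (x \in t)) -> wsum w s = wsum w t.
Proof.
move=> h; rewrite !wsumE; apply: (perm_big _ _); apply: uniq_perm; rewrite ?undup_uniq //.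
by move=> x; rewrite !mem_undup.
Qed.

Lemma wsum_mono (s t : seq X) : {subset s <= t} -> wsum w s <= wsum w t.
Proof.
move=> h; rewrite !wsumE.
have -> : \sum_(x <- undup s) w x = \sum_(x <- undup t | x \in s) w x.
  rewrite -[RHS]big_filter; apply: (perm_big _ _); apply: uniq_perm.
  - exact: undup_uniq.
  - by apply: filter_uniq; exact: undup_uniq.
  by move=> x; rewrite mem_filter !mem_undup; case: (boolP (x \in s)) => // /h ->.
rewrite [X in X <= _]big_mkcond /=; apply: ler_sum => x _; case: ifP => _ //.
exact: ltW.
Qed.

Lemma wsum_ge0 (s : seq X) : 0 <= wsum w s.
Proof. by rewrite wsumE; apply: sumr_ge0 => x _; exact: ltW. Qed.

Lemma wsum_pos (s : seq X) : s <> [::] -> 0 < wsum w s.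
Proof.
case: s => [//|x s] _; rewrite wsumE (bigD1_seq x) ?undup_uniq ?mem_undup ?mem_head //=.
apply: ltr_wpDr; last exact: wpos.
by apply: sumr_ge0 => y _; exact: ltW.
Qed.

Lemma wsum_nil : wsum w [::] = 0.
Proof. by []. Qed.

End Part1.

Section Part2.
Variables (G : Type) (mul : G -> G -> G) (inv : G -> G) (one : G)
  (X : countType) (act : G -> X -> X) (S : list G) (w : X -> R).
Hypotheses (hG : is_group mul inv one) (hA : is_action mul one act)
  (hS : symmetric_generating mul inv one S) (wpos : forall x, 0 < w x).

Fixpoint W (n : nat) : list G :=
  match n with 0 => [:: one]
  | n'.+1 => List.app (W n') (List.flat_map (fun s => List.map (mul s) (W n')) S) end.

Lemma W_mono n m g : (n <= m)%N -> List.In g (W n) -> List.In g (W m).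
Proof.
elim: m => [|m IH] hnm hg; first by move: hnm; rewrite leqn0 => /eqP e; rewrite -e.
case: (eqVneq n m.+1) => [<-|hne] //.
have : (n <= m)%N by rewrite -ltnS ltn_neqAle hne hnm.
by move=> /IH /(_ hg) h /=; apply/List.in_app_iff; left.
Qed.

Lemma W_cover g : exists n, List.In g (W n).
Proof.
have [l [hl ->]] := hS.2 g.
exists (size l); elim: l hl => [|s l IH] hl /=; first by left.
apply/List.in_app_iff; right; apply/List.in_flat_map; exists s; split.
  by apply: hl; left.
by apply: List.in_map; apply: IH => s' hs'; apply: hl; right.
Qed.

Lemma W_cover_list (L : list G) : exists n, forall g, List.In g L -> List.In g (W n).
Proof.
elim: L => [|g L [n IH]]; first by exists 0%N.
have [m hm] := W_cover g.
exists (maxn n m) => g' [<-|hg']; first by apply: W_mono hm; rewrite leq_maxr.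
by apply: W_mono (IH _ hg'); rewrite leq_maxl.
Qed.

Lemma one_W n : List.In one (W n).
Proof. by apply: (@W_mono 0); [|left]. Qed.

Definition TF (T : list G) (F : seq X) : seq X := List.flat_map (fun g => List.map (act g) F) T.

Lemma TF_In T F x : List.In x (TF T F) <-> exists g, List.In g T /\ exists y, List.In y F /\ x = act g y.
Proof.
rewrite /TF List.in_flat_map; split.
  move=> [g [hg /List.in_map_iff [y [<- hy]]]]; exists g; split => //; by exists y.
move=> [g [hg [y [hy ->]]]]; exists g; split => //; exact: List.in_map.
Qed.

Definition eps_ (n : nat) : R := (n.+1%:R)^-1.

Lemma eps_gt0 n : 0 < eps_ n.
Proof. by rewrite /eps_ invr_gt0 ltr0n. Qed.

Lemma expansion : ~ (exists F, w_Folner_sequence act w F) ->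
  exists n, forall F : seq X, F <> [::] -> exists g, List.In g (W n) /\
    (1 + eps_ n) * wsum w F <= wsum w (translate_union act g F).
Proof.
move=> hF; apply: Classical_Prop.NNPP => H; apply: hF.
have H' : forall n, exists F : seq X, F <> [::] /\ forall g, List.In g (W n) ->
    wsum w (translate_union act g F) < (1 + eps_ n) * wsum w F.
  move=> n; apply: Classical_Prop.NNPP => hn; apply: H; exists n => F hF0.
  apply: Classical_Prop.NNPP => hg; apply: hn; exists F; split => // g hgW.
  case: (leP ((1 + eps_ n) * wsum w F) (wsum w (translate_union act g F))) => // hle.
  by exfalso; apply: hg; exists g.
have [Fs hFs] := choice H'.
exists Fs; split; first by move=> n; case: (hFs n).
move=> eps /RltP heps L.
have [M hM] := W_cover_list L.
pose N0 := Num.bound (eps^-1).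
have hN0 : eps^-1 < N0%:R by apply: archi_boundP; rewrite invr_ge0 ltW.
exists (maxn M N0) => n hn g hg.
have hgn : List.In g (W n) by apply: W_mono (hM _ hg); apply: leq_trans hn; rewrite leq_maxl.
have [hne hlt] := hFs n.
have hpos := wsum_pos wpos hne.
have := hlt g hgn => h1.
apply/RltP; rewrite RdivE RplusE ltr_pdivrMr //.
apply: (lt_le_trans h1); rewrite ler_pM2r // lerD2l.
have hNn : (N0 <= n)%N by apply: leq_trans hn; rewrite leq_maxr.
rewrite /eps_.
have hNpos : 0 < (N0.+1)%:R :> R by rewrite ltr0n.
apply: (@le_trans _ _ ((N0.+1)%:R)^-1).
  by rewrite lef_pV2 ?posrE ?ltr0n // ler_nat ltnS.
rewrite -[X in X <= _]div1r ler_pdivrMr //.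
have : 1 < eps * N0%:R.
  by rewrite -ltr_pdivrMl // mulr1.
have : N0%:R <= N0.+1%:R :> R by rewrite ler_nat.
move=> h2 h3; apply: ltW; apply: (lt_le_trans h3); rewrite ler_pM2l //.
Qed.

Lemma TF_mem T F x : (x \in TF T F) <-> exists g, List.In g T /\ exists y, y \in F /\ x = act g y.
Proof.
rewrite -InE TF_In; split => [[g [hg [y [hy e]]]]|[g [hg [y [hy e]]]]]; exists g; split => //;
  exists y; split => //; by apply/InE.
Qed.

Lemma bernoulli (e : R) k : 0 <= e -> 1 + k%:R * e <= (1 + e) ^+ k.
Proof.
move=> he; elim: k => [|k IH]; first by rewrite mul0r addr0 expr0.
rewrite exprS.
have h1 : 0 <= (1 + e) by rewrite addr_ge0.
have h2 : (1 + e) * (1 + k%:R * e) <= (1 + e) * (1 + e) ^+ k by rewrite ler_wpM2l.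
apply: le_trans h2; rewrite -natr1.
have : 0 <= k%:R * e * e by rewrite !mulr_ge0 // ler0n.
lra.
Qed.

Fixpoint Pw (L : list G) (k : nat) : list G :=
  match k with 0 => [:: one]
  | k'.+1 => List.flat_map (fun g => List.map (mul g) (Pw L k')) L end.

Lemma TF_Pw L k F x : (x \in TF (Pw L k.+1) F) = (x \in TF L (TF (Pw L k) F)).
Proof.
apply/idP/idP => /TF_mem [g [hg [y [hy ->]]]].
  move: hg => /List.in_flat_map [g1 [hg1 /List.in_map_iff [h [<- hh]]]].
  apply/TF_mem; exists g1; split => //; exists (act h y); split.
    by apply/TF_mem; exists h; split => //; exists y.
  by rewrite (proj2 hA).
move: hy => /TF_mem [h [hh [z [hz ->]]]].
apply/TF_mem; exists (mul g h); split.
  by apply/List.in_flat_map; exists g; split => //; apply: List.in_map.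
by exists z; split => //; rewrite (proj2 hA).
Qed.

Lemma TF_Pw0 L F x : (x \in TF (Pw L 0) F) = (x \in F).
Proof.
apply/idP/idP => [/TF_mem [g [[<-|[]] [y [hy ->]]]]|hx]; first by rewrite (proj1 hA).
by apply/TF_mem; exists one; split; [left|exists x; rewrite (proj1 hA)].
Qed.

Lemma doubling : ~ (exists F, w_Folner_sequence act w F) ->
  exists T : list G, List.NoDup T /\ T <> [::] /\
    forall F : seq X, 3 * wsum w F <= wsum w (TF T F).
Proof.
move=> hF; have [n hn] := expansion hF.
set e := eps_ n; set L := W n.
have he : 0 <= e by apply: ltW; apply: eps_gt0.
have step F : F <> [::] -> (1 + e) * wsum w F <= wsum w (TF L F).
  move=> hF0; have [g [hg h]] := hn F hF0; apply: (le_trans h); apply: (wsum_mono wpos) => x.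
  rewrite mem_undup mem_cat => /orP [hx|hx]; apply/TF_mem.
    exists g; split => //; move: hx; rewrite -InE lmapE => /List.in_map_iff [y [<- hy]].
    by exists y; split => //; apply/InE.
  by exists one; split; [apply: one_W|exists x; rewrite (proj1 hA)].
have grow k F : F <> [::] -> (1 + e) ^+ k * wsum w F <= wsum w (TF (Pw L k) F).
  move=> hF0; elim: k => [|k IH].
    by rewrite expr0 mul1r le_eqVlt; apply/orP; left; apply/eqP; apply: wsum_ext => x; rewrite TF_Pw0.
  have hne : TF (Pw L k) F <> [::].
    move=> e0; move: IH; rewrite e0 wsum_nil.
    have := wsum_pos wpos hF0; have : 0 < (1 + e) ^+ k by apply: exprn_gt0; lra.
    move=> h1 h2 h3; have := mulr_gt0 h1 h2; rewrite ltNge h3 //.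
  have -> : wsum w (TF (Pw L k.+1) F) = wsum w (TF L (TF (Pw L k) F)).
    by apply: wsum_ext => x; rewrite TF_Pw.
  apply: le_trans (step _ hne); rewrite exprS -mulrA ler_wpM2l //.
  by rewrite addr_ge0.
set k := (2 * n.+1)%N.
have dec : forall a b : G, {a = b} + {a <> b} by move=> a b; exact: pselect.
exists (List.nodup dec (Pw L k)); split; first exact: List.NoDup_nodup.
have hex : forall j, exists g, List.In g (Pw L j).
  elim=> [|j [g hg]]; first by exists one; left.
  exists (mul one g); apply/List.in_flat_map; exists one; split; first exact: one_W.
  exact: List.in_map.
split.
  have [g hg] := hex k; move=> e0; have : List.In g (List.nodup dec (Pw L k)) by apply/List.nodup_In.
  by rewrite e0.
move=> F.
have -> : wsum w (TF (List.nodup dec (Pw L k)) F) = wsum w (TF (Pw L k) F).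
  apply: wsum_ext => x; apply/idP/idP => /TF_mem [g [hg hy]]; apply/TF_mem; exists g; split => //.
    by apply/(List.nodup_In dec).
  by apply/(List.nodup_In dec).
case: (eqVneq F [::]) => [->|hF0]; first by rewrite wsum_nil mulr0 wsum_ge0 //; move=> x; exact: ltW.
have hF0' : F <> [::] by apply/eqP.
have hw := wsum_ge0 wpos F.
apply: le_trans (grow k F hF0'); rewrite ler_wpM2r //.
apply: le_trans (bernoulli k he).
rewrite /k /e /eps_ natrM -mulrA mulfV ?mulr1; last by rewrite pnatr_eq0.
lra.
Qed.

End Part2.

Section Part3.
Variables (G : Type) (mul : G -> G -> G) (inv : G -> G) (one : G)
  (X : countType) (act : G -> X -> X) (w : X -> R) (T : list G).
Hypotheses (hG : is_group mul inv one) (hA : is_action mul one act)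
  (wpos : forall x, 0 < w x)
  (hT : forall F : seq X, 3 * wsum w F <= wsum w (TF act T F)).

Lemma In_nth g : List.In g T <-> exists i : 'I_(size T), nth one T i = g.
Proof.
elim: T => [|a l IH] /=; first by split => //; case=> [[i hi]].
split.
  case=> [<-|/IH [[i hi] e]]; first by exists (Ordinal (ltn0Sn (size l))).
  by exists (Ordinal (hi : (i.+1 < (size l).+1)%N)).
move=> [[[|i] hi] /= e]; first by left.
by right; apply/IH; exists (Ordinal (hi : (i < size l)%N)).
Qed.

Lemma sum_le_single (I : finType) (f : I -> R) i : (forall j, 0 <= f j) -> f i <= \sum_j f j.
Proof.
move=> h; rewrite (bigD1 i) //= -[X in X <= _]addr0 lerD2l.
by apply: sumr_ge0 => j _.
Qed.

Lemma stage n : exists psi : X -> 'I_(size T) -> R,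
  [/\ forall x i, 0 <= psi x i <= 1,
      forall x, (pickle x < n)%N -> \sum_i psi x i = 1 &
      forall y, \sum_(i < size T) psi (act (inv (nth one T i)) y) i * w (act (inv (nth one T i)) y) <= w y / 3].
Proof.
pose s := undup (pmap (@pickle_inv X) (iota 0 n)).
pose A := seq_sub s.
pose tgt := fun (a : A) (i : 'I_(size T)) => act (nth one T i) (val a).
have hH : Hall.hall tgt [set: A * 'I_(size T)] (fun a => w (val a)) (fun y => w y / 3).
  move=> F.
  pose Fl := [seq val x | x <- enum F].
  have e1 : \sum_(x in F) w (val x) = wsum w Fl.
    rewrite wsumE undup_id; last by rewrite map_inj_uniq ?enum_uniq //; exact: val_inj.
    by rewrite big_map big_enum.
  have e2 : \sum_(y <- Hall.U tgt | Hall.NS tgt [set: A * 'I_(size T)] F y) (w y / 3)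
            = wsum w (TF act T Fl) / 3.
    rewrite -mulr_suml wsumE -big_filter; congr (_ * _).
    apply: (perm_big _ _); apply: uniq_perm.
    - by apply: filter_uniq; exact: Hall.U_uniq.
    - exact: undup_uniq.
    move=> y; rewrite mem_filter mem_undup; apply/andP/idP.
      move=> [/existsP [[a i] /andP [_ /andP [/= ha /eqP <-]]] _].
      apply/TF_mem; exists (nth one T i); split; first by apply/In_nth; exists i.
      by exists (val a); split => //; apply: map_f; rewrite mem_enum.
    move=> /TF_mem [g [/In_nth [i <-] [x [/mapP [a ha ->] ->]]]].
    split; last exact: Hall.tgt_in_U.
    apply/existsP; exists (a, i); rewrite inE /=; move: ha; rewrite mem_enum => ->.
    by rewrite eqxx.
  rewrite e1 e2; have := hT Fl; lra.
have ha : forall a : A, 0 <= w (val a) by move=> a; exact: ltW.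
have hc : forall y, 0 <= w y / 3 by move=> y; apply: divr_ge0; [exact: ltW|].
have [f [f1 f2 f3 f4]] := Hall.hall_finite (leqnn _) ha hc hH.
pose fo := fun x i => if @insub X (fun x => x \in s) A x is Some a then f a i else 0.
have fo_le x i : 0 <= fo x i <= w x.
  rewrite /fo; case: insubP => [a _ ea|_]; last by rewrite lexx ltW.
  rewrite f1 /= -ea -f3; exact: sum_le_single.
exists (fun x i => fo x i / w x); split.
- move=> x i; have := fo_le x i => /andP [h1 h2].
  rewrite divr_ge0 ?(ltW (wpos x)) //= ler_pdivrMr ?mul1r //.
- move=> x hx.
  have hxs : x \in s.
    rewrite mem_undup mem_pmap; apply/mapP; exists (pickle x); last by rewrite pickleK_inv.
    by rewrite mem_iota add0n.
  rewrite -mulr_suml /fo insubT /= f3 /= mulfV //; exact: lt0r_neq0.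
- move=> y.
  have -> : \sum_(i < size T) fo (act (inv (nth one T i)) y) i / w (act (inv (nth one T i)) y)
              * w (act (inv (nth one T i)) y) = \sum_(i < size T) fo (act (inv (nth one T i)) y) i.
    by apply: eq_bigr => i _; rewrite divfK //; exact: lt0r_neq0.
  apply: le_trans (f4 y); rewrite /Hall.inflow.
  rewrite [X in _ <= X](eq_bigr (fun a => \sum_(i < size T) (if tgt a i == y then f a i else 0))); last by move=> a _; rewrite big_mkcond.
  rewrite exchange_big /=; apply: ler_sum => i _.
  rewrite /fo; case: insubP => [a _ ea|_]; last by apply: sumr_ge0 => a _; case: ifP.
  rewrite (bigD1 a) //= /tgt ea -(proj2 hA) (proj2 (proj2 (proj2 (proj2 hG)))) (proj1 hA) eqxx.
  rewrite -[X in X <= _]addr0 lerD2l; apply: sumr_ge0 => a' _; by case: ifP.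
Qed.

End Part3.

Lemma approx_le (m : nat) (k u : 'I_m -> R) (b : R) :
  (forall i, 0 <= k i) ->
  (forall e, 0 < e -> exists v : 'I_m -> R, (forall i, `|v i - u i| < e) /\ \sum_i k i * v i <= b) ->
  \sum_i k i * u i <= b.
Proof.
move=> hk h; case: (leP (\sum_i k i * u i) b) => // hlt.
pose K := \sum_i k i + 1.
have hK0 : 0 <= \sum_i k i by apply: sumr_ge0.
have hK : 0 < K by rewrite /K; lra.
pose d := \sum_i k i * u i - b.
have hd : 0 < d by rewrite /d; lra.
pose e := d / K.
have he : 0 < e by rewrite /e divr_gt0.
have [v [hv1 hv2]] := h e he.
have h1 : \sum_i k i * u i - \sum_i k i * v i <= e * \sum_i k i.
  rewrite -sumrB mulr_sumr; apply: ler_sum => i _.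
  rewrite -mulrBr mulrC; apply: ler_wpM2r => //.
  have := hv1 i; rewrite distrC => /ltW; apply: le_trans; exact: ler_norm.
have h2 : e * \sum_i k i < d.
  have -> : d = e * K by rewrite /e divfK //; exact: lt0r_neq0.
  by rewrite ltr_pM2l // /K; lra.
have : b < \sum_i k i * v i by move: h1 h2; rewrite /d; lra.
by rewrite ltNge hv2.
Qed.

Lemma nth_In' (G : Type) (d : G) (l : list G) j : (j < size l)%N -> List.In (nth d l j) l.
Proof.
elim: l j => [|a l IH] [|j] //= hj; first by left.
by right; apply: IH.
Qed.

Lemma nth_NoDup (G : Type) (d : G) (T : list G) i j :
  List.NoDup T -> (i < size T)%N -> (j < size T)%N -> nth d T i = nth d T j -> i = j.
Proof.
elim: T i j => [|a l IH] i j hN hi hj; first by [].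
move: hN => /List.NoDup_cons_iff [ha hl].
case: i hi => [|i] hi; case: j hj => [|j] hj //= heq.
- by exfalso; apply: ha; rewrite heq; apply: nth_In'.
- by exfalso; apply: ha; rewrite -heq; apply: nth_In'.
- by congr S; apply: IH.
Qed.



Section MainSec.
Variables (G : Type) (mul : G -> G -> G) (inv : G -> G) (one : G)
  (X : countType) (act : G -> X -> X) (S : list G) (w : X -> R).
Hypotheses (hG : is_group mul inv one) (hA : is_action mul one act)
  (hS : symmetric_generating mul inv one S) (wpos : forall x, 0 < w x)
  (hF : ~ (exists F, w_Folner_sequence act w F)).

Lemma gsumE (T : list G) (f : G -> R) : gsum T f = \sum_(i < size T) f (nth one T i).
Proof.
rewrite -(big_mkord xpredT (fun i => f (nth one T i))) -(big_nth one xpredT f) /gsum.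
by elim: T => [|a l IH] /=; rewrite ?big_nil ?big_cons ?IH.
Qed.

Lemma main_lemma : exists (T : list G) (Psi : G -> X -> R), w_compression_system inv act w T Psi.
Proof.
have [T [hND [hT0 hT]]] := doubling hA hS wpos hF.
have [psis hpsis] := choice (stage hG hA wpos hT).
have hb : forall n (c : X * 'I_(size T)), 0 <= psis n c.1 c.2 <= 1.
  by move=> n [x i]; case: (hpsis n) => h _ _; exact: h.
have [p [hp01 hpcl]] := @Clu.cluster_seq R _ (fun n c => psis n c.1 c.2) hb.
pose Psi := fun g x => if pselect (exists i : 'I_(size T), nth one T i = g) is left h
  then p (x, projT1 (cid h)) else 0.
have PsiE : forall (i : 'I_(size T)) x, Psi (nth one T i) x = p (x, i).
  move=> i x; rewrite /Psi; case: pselect => [h|h]; last by exfalso; apply: h; exists i.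
  case: (cid h) => j hj /=; congr p; congr pair; apply: val_inj.
  exact: (nth_NoDup hND (ltn_ord j) (ltn_ord i) hj).
have Psi01 : forall g x, 0 <= Psi g x <= 1.
  move=> g x; rewrite /Psi; case: pselect => [h|_] //; by rewrite lexx ler01.
exists T, Psi; split => //; split.
  move=> g hg; split => [x|]; first by apply/RleP; case/andP: (Psi01 g x).
  by exists 1 => x; apply/RleP; case/andP: (Psi01 g x).
move=> x; split.
  rewrite gsumE (eq_bigr (fun i => p (x, i))); last by move=> i _; rewrite PsiE.
  have cl : forall e, 0 < e -> exists n, (forall i : 'I_(size T), `|psis n x i - p (x, i)| < e)
                               /\ \sum_i psis n x i = 1.
    move=> e he; have [n [hn hcl]] := hpcl [seq (x, i) | i <- enum 'I_(size T)] e he (pickle x).+1.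
    exists n; split.
      by move=> i; apply: (hcl (x, i)); apply/mapP; exists i; rewrite ?mem_enum.
    by case: (hpsis n) => _ h2 _; apply: h2.
  have hle : \sum_(i < size T) 1 * p (x, i) <= 1.
    apply: approx_le => // e he; have [n [h1 h2]] := cl e he.
    exists (fun i => psis n x i); split => //.
    by rewrite (eq_bigr (fun i => psis n x i)) ?h2 // => i _ /=; rewrite mul1r.
  have hge : \sum_(i < size T) 1 * (- p (x, i)) <= -1.
    apply: approx_le => // e he; have [n [h1 h2]] := cl e he.
    exists (fun i => - psis n x i); split.
      by move=> i; rewrite -opprD normrN.
    by rewrite (eq_bigr (fun i => - psis n x i)) ?sumrN ?h2 // => i _ /=; rewrite mul1r.
  have e1 : \sum_(i < size T) 1 * p (x, i) = \sum_(i < size T) p (x, i).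
    by apply: eq_bigr => i _; rewrite mul1r.
  have e2 : \sum_(i < size T) 1 * (- p (x, i)) = - \sum_(i < size T) p (x, i).
    by rewrite -sumrN; apply: eq_bigr => i _; rewrite mul1r.
  have eone : IZR 1 = 1 by []. rewrite e1 in hle; rewrite e2 in hge; apply/eqP; rewrite eq_le hle /= eone; lra.
rewrite gsumE.
pose xi := fun i : 'I_(size T) => act (inv (nth one T i)) x.
rewrite (eq_bigr (fun i => (w (xi i) / w x) * p (xi i, i))); last first.
  by move=> i _; rewrite PsiE mulrC.
have hle : \sum_(i < size T) (w (xi i) / w x) * p (xi i, i) <= 3^-1.
  apply: approx_le.
    by move=> i; apply: divr_ge0; apply: ltW.
  move=> e he; have [n [_ hcl]] := hpcl [seq (xi i, i) | i <- enum 'I_(size T)] e he 0%N.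
  exists (fun i => psis n (xi i) i); split.
    by move=> i; apply: (hcl (xi i, i)); apply/mapP; exists i; rewrite ?mem_enum.
  case: (hpsis n) => _ _ h3; have := h3 x.
  rewrite (eq_bigr (fun i => (w (xi i) / w x) * psis n (xi i) i * w x)); last first.
    move=> i _; have hx := lt0r_neq0 (wpos x); rewrite /xi; field; exact: hx.
  by rewrite -mulr_suml [w x / 3]mulrC ler_pM2r.
apply/RltP; rewrite RinvE.
have e2 : IZR 2 = 2%:R by rewrite -INRE INR_IZR_INZ.
rewrite e2; apply: (le_lt_trans hle); lra.
Qed.

End MainSec.
End H.

Theorem proposition2p3 (G : Type) (mul : G -> G -> G) (inv : G -> G) (one : G)
  (X : countType) (act : G -> X -> X) (S : list G) (w : X -> R) :
  is_group mul inv one ->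
  is_action mul one act ->
  symmetric_generating mul inv one S ->
  (forall x, (0 < w x)%R) ->
  balanced act S w ->
  ~ (exists F : nat -> list X, w_Folner_sequence act w F) ->
  exists (T : list G) (Psi : G -> X -> R), w_compression_system inv act w T Psi.
Proof.
move=> hG hA hS wpos _ hF.
apply: (H.main_lemma hG hA hS _ hF).
by move=> x; apply/Rstruct.RltP.
Qed.
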